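(* Let $p$ and $s$ be distinct odd primes, $g$ a primitive root modulo $p$, $\zeta$ a primitive $p$-th root of unity in $\overline{\mathbb{F}}_s$, and $G(p)=\langle a,b\mid a^p=1=b^{(p-1)/2},\ b^{-1}ab=a^{g^2}\rangle$. Let $\rho:\langle a\rangle\to\overline{\mathbb{F}}_s^*$ be given by $\rho(a)=\zeta$ and let $\rho^{G(p)}$ be the induced representation. Then $\rho^{G(p)}$ is realizable over $\mathbb{F}_s$ if and only if $\left(\frac{p^*}{s}\right)=1$, where $p^*=(-1)^{(p-1)/2}p$.
   Context: $\left(\frac{\cdot}{s}\right)$ is the Legendre symbol. A representation over $\overline{\mathbb{F}}_s$ is realizable over $\mathbb{F}_s$ if it is equivalent (over $\overline{\mathbb{F}}_s$) to a matrix representation with all matrix entries in $\mathbb{F}_s$. Concretely, with $n=(p-1)/2$, $\rho^{G(p)}$ acts on a space with basis $e_0,\dots,e_{n-1}$ by $ae_i=\zeta^{g^{2i}}e_i$, $be_i=e_{i+1}$ (indices modulo $n$). *)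

(* Defs.v *)
From HB Require Import structures.
From mathcomp Require Import all_boot all_order all_algebra all_fingroup all_field.
Set Implicit Arguments. Unset Strict Implicit. Unset Printing Implicit Defensive.
Import GRing.Theory.
Local Open Scope ring_scope.

Definition legendre (a : int) (s : nat) : int :=
  let a' : 'F_s := a%:~R in
  if a' == 0 then 0
  else if [exists x : 'F_s, x ^+ 2 == a'] then 1 else -1.

(* The matrices of the induced representation rho^{G(p)} on the basis
   e_0..e_{n-1}, n = (p-1)/2, acting on column vectors:
   a e_i = zeta^(g^(2i)) e_i,  b e_i = e_{i+1} (indices mod n). *)
Definition ind_a (L : fieldType) (n g : nat) (zeta : L) : 'M[L]_n :=
  \matrix_(i < n, j < n) (if i == j then zeta ^+ (g ^ (2 * j)) else 0).

Definition ind_b (L : fieldType) (n : nat) : 'M[L]_n :=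
  \matrix_(i < n, j < n) (if (i : nat) == (j.+1 %% n)%N then 1 else 0).

Definition Fs_to (s : nat) (L : fieldType) (c : 'F_s) : L := (c : nat)%:R.

(* A pair of matrices (images of the generators a, b) is realizable over F_s
   if it is conjugate over L to a pair of matrices with entries in F_s;
   a representation of G(p) is determined by the images of a and b. *)
Definition realizable_over_Fs (s : nat) (L : fieldType) (n : nat)
    (A B : 'M[L]_n) : Prop :=
  exists (P : 'M[L]_n) (A' B' : 'M['F_s]_n),
    P \in unitmx /\
    P *m A *m invmx P = map_mx (@Fs_to s L) A' /\
    P *m B *m invmx P = map_mx (@Fs_to s L) B'.

(* Main.v *)
Require Import Defs.
From HB Require Import structures.
From mathcomp Require Import all_boot all_order all_algebra all_fingroup all_field.
Import GRing.Theory.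
Local Open Scope ring_scope.
Set Implicit Arguments. Unset Strict Implicit.


Lemma Fs_to_nat (s : nat) (L : fieldType) (chs : s \in [pchar L]) (ps : prime s)
  (a : nat) : Fs_to L (a%:R : 'F_s) = a%:R.
Proof.
rewrite /Fs_to val_Fp_nat // {2}(divn_eq a s) natrD natrM (pcharf0 chs).
by rewrite mulr0 add0r.
Qed.

Lemma Fs_rep (s : nat) (ps : prime s) (x : 'F_s) : x = (x : nat)%:R.
Proof.
apply: val_inj; rewrite /= val_Fp_nat // modn_small //.
have := ltn_ord x; by rewrite [X in (_ < X)%N]Fp_cast.
Qed.

Lemma Fs_toD (s : nat) (L : fieldType) (chs : s \in [pchar L]) (ps : prime s)
  (x y : 'F_s) : Fs_to L (x + y) = Fs_to L x + Fs_to L y.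
Proof.
by rewrite {1}(Fs_rep ps x) {1}(Fs_rep ps y) -natrD Fs_to_nat // natrD.
Qed.

Lemma Fs_toM (s : nat) (L : fieldType) (chs : s \in [pchar L]) (ps : prime s)
  (x y : 'F_s) : Fs_to L (x * y) = Fs_to L x * Fs_to L y.
Proof.
by rewrite {1}(Fs_rep ps x) {1}(Fs_rep ps y) -natrM Fs_to_nat // natrM.
Qed.

Lemma Fs_to1 (s : nat) (L : fieldType) (chs : s \in [pchar L]) (ps : prime s) :
  Fs_to L (1 : 'F_s) = 1.
Proof. by have := Fs_to_nat chs ps 1; rewrite !mulr1n. Qed.

Lemma Fs_to0 (s : nat) (L : fieldType) (x : 'F_s) : Fs_to L (0 : 'F_s) = 0.
Proof. by []. Qed.

Lemma Fs_toN (s : nat) (L : fieldType) (chs : s \in [pchar L]) (ps : prime s)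
  (x : 'F_s) : Fs_to L (- x) = - Fs_to L x.
Proof.
apply/eqP; rewrite -subr_eq0 opprK -Fs_toD // addNr //.
Qed.

Lemma Fs_toX (s : nat) (L : fieldType) (chs : s \in [pchar L]) (ps : prime s)
  (x : 'F_s) k : Fs_to L (x ^+ k) = Fs_to L x ^+ k.
Proof.
elim: k => [|k IH]; first by rewrite !expr0 Fs_to1.
by rewrite !exprS Fs_toM // IH.
Qed.

Lemma Fs_to_eq0 (s : nat) (L : fieldType) (chs : s \in [pchar L]) (ps : prime s)
  (x : 'F_s) : Fs_to L x = 0 -> x = 0.
Proof.
move=> /eqP; rewrite /Fs_to -(dvdn_pcharf chs) => d.
have := ltn_ord x; rewrite [X in (_ < X)%N -> _]Fp_cast // => lt.
apply: val_inj => /=; apply/eqP; apply: contraLR lt; rewrite -leqNgt -lt0n => xp.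
exact: dvdn_leq.
Qed.

Lemma Fs_to_inj (s : nat) (L : fieldType) (chs : s \in [pchar L]) (ps : prime s)
  (x y : 'F_s) : Fs_to L x = Fs_to L y -> x = y.
Proof.
move=> e; apply/eqP; rewrite -subr_eq0; apply/eqP; apply: (Fs_to_eq0 chs ps).
by rewrite Fs_toD // Fs_toN // e subrr.
Qed.

Lemma Fs_to_frob (s : nat) (L : fieldType) (chs : s \in [pchar L]) (x : 'F_s) :
  Fs_to L x ^+ s = Fs_to L x.
Proof. by rewrite /Fs_to -(pFrobenius_autE chs) pFrobenius_aut_nat. Qed.

Lemma frob_fixed (s : nat) (L : fieldType) (chs : s \in [pchar L]) (ps : prime s)
  (c : L) : c ^+ s = c -> exists x : 'F_s, Fs_to L x = c.
Proof.
move=> hc.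
case: (boolP [exists x : 'F_s, Fs_to L x == c]) => [/existsP [x /eqP]|nex].
  by exists x.
exfalso.
have s1 : (1 < s)%N by apply: prime_gt1.
pose P : {poly L} := 'X^s - 'X.
have szP : size P = s.+1.
  rewrite /P size_polyDl size_polyXn // size_polyN size_polyX ltnS //.
have P0 : P != 0 by rewrite -size_poly_eq0 szP.
pose rs := c :: [seq Fs_to L x | x <- enum 'F_s].
have := @max_poly_roots _ P rs P0.
have -> : all (root P) rs.
  apply/allP => y; rewrite inE => /orP [/eqP ->|/mapP [x _ ->]];
    by rewrite /root /P !hornerE ?hc ?Fs_to_frob ?subrr.
have -> : uniq rs.
  rewrite /= map_inj_uniq ?enum_uniq ?andbT; last exact: Fs_to_inj.
  apply/mapP => [[x _ ex]]; move/existsP: nex; apply; exists x; by rewrite ex.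
by rewrite /= size_map -cardE card_Fp // szP ltnn => /(_ isT isT).
Qed.


Lemma zeta_Fp (p : nat) (L : fieldType) (zeta : L) (pp : prime p)
  (hz : p.-primitive_root zeta) (a b : nat) :
  (a%:R : 'F_p) = b%:R -> zeta ^+ a = zeta ^+ b.
Proof.
move/(congr1 val); rewrite /= !val_Fp_nat // => e.
by rewrite -(prim_expr_mod hz a) e prim_expr_mod.
Qed.

Lemma zeta_val (p : nat) (L : fieldType) (zeta : L) (pp : prime p)
  (hz : p.-primitive_root zeta) (x : 'F_p) (a : nat) :
  x = a%:R -> zeta ^+ x = zeta ^+ a.
Proof. by move=> e; apply: (zeta_Fp pp hz); rewrite -Fs_rep. Qed.

Lemma Fp_inj (p g : nat) (pp : prime p)
  (hG : (p.-1).-primitive_root (g%:R : 'F_p)) (C : 'F_p) : C != 0 ->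
  injective (fun e : 'I_p.-1 => (g%:R : 'F_p) ^+ e * C).
Proof.
move=> C0 e1 e2 /= /(mulIf C0) /eqP; rewrite (eq_prim_root_expr hG) => h.
by apply: val_inj; move: h; rewrite !modn_small // => /eqP.
Qed.

Lemma G_neq0 (p g : nat) (pp : prime p)
  (hG : (p.-1).-primitive_root (g%:R : 'F_p)) : (g%:R : 'F_p) != 0.
Proof.
apply/eqP => G0; have := prim_expr_order hG; rewrite G0 expr0n.
have := prim_order_gt0 hG; case: (p.-1) => // k _ /eqP; by rewrite eq_sym oner_eq0.
Qed.

Lemma Fp_image (p g : nat) (pp : prime p)
  (hG : (p.-1).-primitive_root (g%:R : 'F_p)) (C : 'F_p) : C != 0 ->
  [set~ 0] = [set (g%:R : 'F_p) ^+ (e : nat) * C | e : 'I_p.-1].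
Proof.
move=> C0; apply/eqP; rewrite eq_sym eqEcard; apply/andP; split.
  apply/subsetP => x /imsetP [e _ ->]; rewrite in_setC1.
  by rewrite mulf_neq0 // expf_neq0 // (G_neq0 pp hG).
rewrite card_imset; last exact: (Fp_inj pp hG).
by rewrite (cardsC1 (0 : 'F_p)) card_Fp // card_ord.
Qed.

Lemma sum_zeta_Fp (p : nat) (L : fieldType) (zeta : L) (pp : prime p)
  (hz : p.-primitive_root zeta) : \sum_(x : 'F_p) zeta ^+ x = 0.
Proof.
rewrite -(big_mkord xpredT (fun i => zeta ^+ i)) Fp_cast // big_mkord.
have z1 : zeta != 1.
  apply/eqP => z1; have := eq_prim_root_expr hz 1 0; rewrite z1 expr1n expr0 eqxx.
  by rewrite !modn_small ?prime_gt1 // ?prime_gt0.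
apply/eqP; have: (zeta - 1) * \sum_(i < p) zeta ^+ i == 0.
  by rewrite -subrX1 prim_expr_order // subrr.
by rewrite mulf_eq0 subr_eq0 (negbTE z1).
Qed.

Lemma S_eval (p g : nat) (L : fieldType) (zeta : L) (pp : prime p)
  (hG : (p.-1).-primitive_root (g%:R : 'F_p))
  (hz : p.-primitive_root zeta) (c : nat) :
  \sum_(e < p.-1) zeta ^+ (g ^ e * c) = if (p %| c)%N then (p.-1)%:R else -1.
Proof.
case: ifP => pc.
  rewrite (eq_bigr (fun _ => 1)) ?sumr_const ?card_ord // => e _.
  by rewrite -(prim_expr_mod hz) (eqP (dvdn_mull _ pc)) expr0.
have C0 : (c%:R : 'F_p) != 0 by rewrite -(dvdn_pcharf (pchar_Fp pp)) pc.
rewrite (eq_bigr (fun e : 'I_p.-1 => zeta ^+ (((g%:R : 'F_p) ^+ e * c%:R)%R : 'F_p))); last first.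
  by move=> e _; apply/esym; apply: (zeta_val pp hz); rewrite natrM natrX.
rewrite -(big_imset (fun x : 'F_p => zeta ^+ x)) /=; last first.
  by move=> x y _ _; apply: (Fp_inj pp hG C0).
rewrite -(Fp_image pp hG C0).
have e0 : zeta ^+ (0%R : 'F_p) = 1 by rewrite expr0.
have := sum_zeta_Fp pp hz; rewrite (bigD1 0%R) //= e0 => /eqP.
rewrite addrC addr_eq0 => /eqP <-.
by apply: eq_bigl => x; rewrite in_setC1.
Qed.


Lemma sum_ind (R : zmodType) (n : nat) (F : 'I_n -> R) (c : 'I_n) :
  \sum_(l < n) (if l == c then F l else 0) = F c.
Proof.
rewrite (bigD1 c) //= eqxx big1 ?addr0 // => i /negbTE -> //.
Qed.

Lemma sum_ind_nat (R : zmodType) (n : nat) (F : nat -> R) (c : nat) :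
  (c < n)%N -> \sum_(l < n) (if (l : nat) == c then F l else 0) = F c.
Proof.
move=> cn; rewrite (bigD1 (Ordinal cn)) //= eqxx big1 ?addr0 // => i.
by rewrite -(inj_eq val_inj) /= => /negbTE ->.
Qed.

Lemma sum_shift (R : zmodType) (N k : nat) (h : nat -> R) :
  (forall i, h (i + N)%N = h i) -> \sum_(i < N) h (i + k)%N = \sum_(i < N) h i.
Proof.
move=> hp; elim: k => [|k IH]; first by apply: eq_bigr => i _; rewrite addn0.
rewrite -IH.
have e1 : \sum_(i < N.+1) h (i + k)%N = h (0 + k)%N + \sum_(i < N) h (i.+1 + k)%N.
  by rewrite big_ord_recl.
have e2 : \sum_(i < N.+1) h (i + k)%N = \sum_(i < N) h (i + k)%N + h (N + k)%N.
  by rewrite big_ord_recr.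
have : h (0 + k)%N + \sum_(i < N) h (i.+1 + k)%N = \sum_(i < N) h (i + k)%N + h (N + k)%N.
  by rewrite -e1 -e2.
rewrite [(N + k)%N]addnC hp add0n addrC => /addIr <-.
by apply: eq_bigr => i _; rewrite addnS addSn.
Qed.

Lemma sum_pair (R : zmodType) (n : nat) (h : nat -> R) :
  \sum_(i < n.*2) h i = \sum_(j < n) (h j.*2 + h j.*2.+1).
Proof.
elim: n => [|n IH]; first by rewrite !big_ord0.
rewrite doubleS !big_ord_recr /= IH addrA //.
Qed.

Lemma G_half (p g n : nat) (pp : prime p)
  (hG : (p.-1).-primitive_root (g%:R : 'F_p)) :
  p.-1 = n.*2 -> (0 < n)%N -> (g%:R : 'F_p) ^+ n = -1.
Proof.
move=> Np n0; have : ((g%:R : 'F_p) ^+ n) ^+ 2 == 1.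
  by rewrite -exprM muln2 -Np prim_expr_order.
rewrite sqrf_eq1 => /orP [/eqP h|/eqP //].
have := eq_prim_root_expr hG n 0; rewrite h expr0 eqxx Np mod0n modn_small.
  by rewrite eqn0Ngt n0.
by rewrite -addnn -{1}(addn0 n) ltn_add2l.
Qed.

Lemma dvd_one_plus (p g n : nat) (pp : prime p)
  (hG : (p.-1).-primitive_root (g%:R : 'F_p)) (d : nat) :
  p.-1 = n.*2 -> (0 < n)%N -> (d < p.-1)%N -> (p %| 1 + g ^ d)%N = (d == n).
Proof.
move=> Np n0 dN.
rewrite (dvdn_pcharf (pchar_Fp pp)) natrD natrX addrC addr_eq0.
rewrite -(G_half pp hG Np n0) (eq_prim_root_expr hG) !modn_small //.
by rewrite Np -addnn -{1}(addn0 n) ltn_add2l.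
Qed.

Definition tau (L : fieldType) (p g : nat) (zeta : L) :=
  \sum_(e < p.-1) (-1) ^+ e * zeta ^+ (g ^ e).

Lemma zeta_per (p g : nat) (L : fieldType) (zeta : L) (pp : prime p)
  (hG : (p.-1).-primitive_root (g%:R : 'F_p))
  (hz : p.-primitive_root zeta) (f : nat) :
  zeta ^+ (g ^ (f + p.-1)) = zeta ^+ (g ^ f).
Proof.
apply: (zeta_Fp pp hz); by rewrite !natrX exprD (prim_expr_order hG) mulr1.
Qed.

Lemma sign_per (L : fieldType) (n f : nat) :
  (-1) ^+ (f + n.*2) = (-1) ^+ f :> L.
Proof. by rewrite exprD -muln2 exprM sqrr_sign mulr1. Qed.

Lemma tau_sq (p g n : nat) (L : fieldType) (zeta : L) (pp : prime p)
  (hG : (p.-1).-primitive_root (g%:R : 'F_p))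
  (hz : p.-primitive_root zeta) :
  p.-1 = n.*2 -> (0 < n)%N ->
  tau p g zeta * tau p g zeta = (-1) ^+ n * p%:R.
Proof.
move=> Np n0; rewrite /tau.
have sp : forall i, (-1) ^+ (i + p.-1) = (-1) ^+ i :> L by move=> i; rewrite Np sign_per.
transitivity (\sum_(d < p.-1) (-1) ^+ d *
   \sum_(e < p.-1) zeta ^+ (g ^ e * (1 + g ^ d))).
  rewrite mulr_suml (eq_bigr (fun e : 'I_p.-1 => \sum_(d < p.-1)
     (-1) ^+ d * zeta ^+ (g ^ e * (1 + g ^ d)))); last first.
    move=> e _; rewrite mulr_sumr.
    rewrite -(@sum_shift _ _ e (fun f => (-1) ^+ e * zeta ^+ (g ^ e) *
                                    ((-1) ^+ f * zeta ^+ (g ^ f)))); last first.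
      by move=> i; rewrite zeta_per // sp.
    apply: eq_bigr => d _.
    rewrite mulrACA -exprD addnCA addnn sign_per -exprD; congr (_ * zeta ^+ _).
    by rewrite expnD mulnDr muln1 [(g ^ d * g ^ e)%N]mulnC.
  rewrite exchange_big /=; apply: eq_bigr => d _; by rewrite mulr_sumr.
rewrite (eq_bigr (fun d : 'I_p.-1 => (-1) ^+ d * (-1) +
    (if (d : nat) == n then (-1) ^+ n * p%:R else 0))); last first.
  move=> d _; rewrite S_eval // (dvd_one_plus pp hG Np n0) //.
  case: eqP => [->|_]; last by rewrite addr0.
  rewrite -mulrDr; congr (_ * _).
  by rewrite -{2}(prednK (prime_gt0 pp)) -addn1 natrD addrCA addNr addr0.
rewrite big_split /= (@sum_ind_nat _ _ (fun _ => (-1) ^+ n * p%:R)); last by rewrite Np -addnn -{1}(addn0 n) ltn_add2l.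
rewrite -mulr_suml Np sum_pair big1 ?mul0r ?add0r // => j _.
by rewrite exprS -muln2 exprM sqrr_sign mulr1 addrN.
Qed.


Lemma exists_k (p g s : nat) (pp : prime p)
  (hG : (p.-1).-primitive_root (g%:R : 'F_p)) :
  ~~ (p %| s)%N -> exists k : nat, (s%:R : 'F_p) = (g%:R : 'F_p) ^+ k.
Proof.
move=> ps.
have s0 : (s%:R : 'F_p) != 0 by rewrite -(dvdn_pcharf (pchar_Fp pp)).
have : (s%:R : 'F_p) \in [set~ 0] by rewrite in_setC1.
rewrite (Fp_image pp hG (oner_neq0 _)) => /imsetP [e _ ->].
by exists e; rewrite mulr1.
Qed.

Lemma tau_frob (p g n s k : nat) (L : fieldType) (zeta : L) (pp : prime p)
  (hG : (p.-1).-primitive_root (g%:R : 'F_p))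
  (hz : p.-primitive_root zeta) (chs : s \in [pchar L]) :
  odd s -> p.-1 = n.*2 -> (s%:R : 'F_p) = (g%:R : 'F_p) ^+ k ->
  tau p g zeta ^+ s = (-1) ^+ k * tau p g zeta.
Proof.
move=> os Np sk.
have sk' : forall e, zeta ^+ (g ^ e) ^+ s = zeta ^+ (g ^ (e + k)).
  move=> e; rewrite -exprM; apply: (zeta_Fp pp hz).
  by rewrite !natrM !natrX sk exprD.
have sp : forall i, (-1) ^+ (i + p.-1) = (-1) ^+ i :> L by move=> i; rewrite Np sign_per.
rewrite /tau -(pFrobenius_autE chs) rmorph_sum mulr_sumr.
rewrite (eq_bigr (fun e : 'I_p.-1 => (-1) ^+ k * ((-1) ^+ (e + k) * zeta ^+ (g ^ (e + k))))); last first.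
  move=> e _; rewrite rmorphM /= !pFrobenius_autE.
  rewrite mulrA -exprD addnCA addnn sign_per -exprM mulnC exprM.
  have s1 : (-1) ^+ s = -1 :> L by rewrite -signr_odd os expr1.
  by rewrite s1 sk'.
rewrite -!mulr_sumr; congr (_ * _).
apply: (@sum_shift _ _ k (fun e => (-1) ^+ e * zeta ^+ (g ^ e))) => i.
by rewrite sp zeta_per.
Qed.

Lemma eta_tau (p g n : nat) (L : fieldType) (zeta : L) (pp : prime p)
  (hG : (p.-1).-primitive_root (g%:R : 'F_p))
  (hz : p.-primitive_root zeta) :
  p.-1 = n.*2 ->
  2%:R * \sum_(j < n) zeta ^+ (g ^ (2 * j)) = tau p g zeta - 1.
Proof.
move=> Np.
have S1 : \sum_(e < p.-1) zeta ^+ (g ^ e) = -1.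
  have := S_eval pp hG hz 1; rewrite dvdn1.
  by rewrite (gtn_eqF (prime_gt1 pp)) => <-; apply: eq_bigr => e _; rewrite muln1.
rewrite -S1 /tau -big_split /= Np.
rewrite (@sum_pair _ _ (fun i => (-1) ^+ i * zeta ^+ (g ^ i) + zeta ^+ (g ^ i))) mulr_sumr.
apply: eq_bigr => j _.
have e0 : (-1) ^+ (j.*2) = 1 :> L by rewrite -(add0n j.*2) sign_per expr0.
by rewrite exprS e0 mulr1 mul1r mulN1r addNr addr0 mul2n mulr_natl mulr2n.
Qed.

Lemma trace_ind_a (L : fieldType) (n g : nat) (zeta : L) :
  \tr (ind_a n g zeta) = \sum_(j < n) zeta ^+ (g ^ (2 * j)).
Proof. by apply: eq_bigr => j _; rewrite mxE eqxx. Qed.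


Lemma sum_mul_ind_nat (R : comNzRingType) (n : nat) (F : 'I_n -> R) (c : nat) (x : R)
  (cn : (c < n)%N) :
  \sum_(l < n) F l * (if (l : nat) == c then x else 0) = F (Ordinal cn) * x.
Proof.
rewrite (bigD1 (Ordinal cn)) //= eqxx big1 ?addr0 // => i.
by rewrite -(inj_eq val_inj) /= => /negbTE ->; rewrite mulr0.
Qed.

Lemma sum_mul_ind (R : comNzRingType) (n : nat) (F : 'I_n -> R) (c : 'I_n) (x : R) :
  \sum_(l < n) F l * (if l == c then x else 0) = F c * x.
Proof.
rewrite (bigD1 c) //= eqxx big1 ?addr0 // => i /negbTE ->; by rewrite mulr0.
Qed.

Lemma rat_mx (s : nat) (L : fieldType) (chs : s \in [pchar L]) (ps : prime s)
  (n : nat) (Y : 'M[L]_n) :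
  map_mx (pFrobenius_aut chs) Y = Y ->
  exists Y' : 'M['F_s]_n, map_mx (@Fs_to s L) Y' = Y.
Proof.
move=> hY.
exists (\matrix_(i, j) odflt 0 [pick x : 'F_s | Fs_to L x == Y i j]).
apply/matrixP => i j; rewrite !mxE.
have hf : Y i j ^+ s = Y i j.
  by have := congr1 (fun Z : 'M[L]_n => Z i j) hY; rewrite /= mxE pFrobenius_autE.
have [x ex] := frob_fixed chs ps hf.
case: pickP => [y /eqP //|none].
by have := none x; rewrite ex eqxx.
Qed.

Lemma realize (s : nat) (L : fieldType) (chs : s \in [pchar L]) (ps : prime s)
  (n m : nat) (lam : nat -> L) :
  (forall j, lam (j %% n.+1)%N = lam j) ->
  (forall j, lam j ^+ s = lam (j + m)%N) ->
  (forall i j : 'I_n.+1, lam i = lam j -> i = j) ->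
  realizable_over_Fs s (\matrix_(i < n.+1, j < n.+1) (if i == j then lam j else 0))
                       (ind_b L n.+1).
Proof.
move=> hper hfr hinj.
set A := \matrix_(i < n.+1, j < n.+1) (if i == j then lam j else 0).
set B := ind_b L n.+1.
pose M : 'M[L]_n.+1 := \matrix_(k, j) lam j ^+ k.
pose Bm : 'M[L]_n.+1 := \matrix_(i, j) (if (i : nat) == ((j + m) %% n.+1)%N then 1 else 0).
have Mu : M \in unitmx.
  rewrite unitmxE unitfE.
  have -> : M = Vandermonde n.+1 (\row_j lam j) by apply/matrixP => i j; rewrite !mxE.
  rewrite det_Vandermonde; apply/prodf_neq0 => i _; apply/prodf_neq0 => j ij.
  rewrite subr_eq0; apply/eqP; rewrite !mxE => /hinj ji.
  by move: ij; rewrite ji ltnn.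
have MBm : map_mx (pFrobenius_aut chs) M = M *m Bm.
  apply/matrixP => k j; rewrite !mxE pFrobenius_autE -exprM mulnC exprM hfr.
  rewrite (eq_bigr (fun l : 'I_n.+1 => lam l ^+ k *
     (if (l : nat) == ((j + m) %% n.+1)%N then 1 else 0))); last first.
    by move=> l _; rewrite !mxE.
  by rewrite (sum_mul_ind_nat (fun l : 'I_n.+1 => lam l ^+ k) _ (ltn_pmod _ _)) //= hper mulr1.
have key : forall X, Bm *m map_mx (pFrobenius_aut chs) X = X *m Bm ->
    map_mx (pFrobenius_aut chs) (M *m X *m invmx M) = M *m X *m invmx M.
  move=> X hX.
  have MBu : (M *m Bm) \in unitmx by rewrite -MBm map_unitmx.
  rewrite !map_mxM map_invmx MBm -(mulmxA M Bm) hX mulmxA.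
  rewrite -[RHS](mulmxK MBu); congr (_ *m _).
  by rewrite !mulmxA (mulmxKV Mu).
have hA : Bm *m map_mx (pFrobenius_aut chs) A = A *m Bm.
  apply/matrixP => i j; rewrite !mxE.
  rewrite (eq_bigr (fun l : 'I_n.+1 => Bm i l *
     (if l == j then lam (j + m)%N else 0))); last first.
    by move=> l _; congr (_ * _); rewrite !mxE; case: eqP => _; rewrite ?rmorph0 // pFrobenius_autE hfr.
  rewrite sum_mul_ind.
  rewrite (eq_bigr (fun l : 'I_n.+1 => A i l *
     (if (l : nat) == ((j + m) %% n.+1)%N then 1 else 0))); last first.
    by move=> l _; rewrite [Bm _ _]mxE.
  rewrite (sum_mul_ind_nat (fun l : 'I_n.+1 => A i l) _ (ltn_pmod _ _)) //= !mxE.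
  rewrite -(inj_eq val_inj) /=.
  by case: eqP => _; rewrite ?mul0r ?mul1r ?mulr1 // hper.
have hB : Bm *m map_mx (pFrobenius_aut chs) B = B *m Bm.
  apply/matrixP => i j; rewrite !mxE.
  rewrite (eq_bigr (fun l : 'I_n.+1 => Bm i l *
     (if (l : nat) == (j.+1 %% n.+1)%N then 1 else 0))); last first.
    by move=> l _; congr (_ * _); rewrite /B /ind_b !mxE; case: eqP => _; rewrite ?rmorph0 ?rmorph1.
  rewrite (sum_mul_ind_nat (fun l : 'I_n.+1 => Bm i l) _ (ltn_pmod _ _)) //=.
  rewrite (eq_bigr (fun l : 'I_n.+1 => B i l *
     (if (l : nat) == ((j + m) %% n.+1)%N then 1 else 0))); last first.
    by move=> l _; rewrite [Bm _ _]mxE.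
  rewrite (sum_mul_ind_nat (fun l : 'I_n.+1 => B i l) _ (ltn_pmod _ _)) //= !mxE /=.
  rewrite modnDml -[((j + m) %% n.+1).+1]addn1 modnDml addn1 addSn //.
have [A' eA] := rat_mx ps (key _ hA).
have [B' eB] := rat_mx ps (key _ hB).
by exists M, A', B'.
Qed.

Unset Implicit Arguments. Set Strict Implicit.

Theorem theorem3p3 (p s : nat) (L : closedFieldType) (g : nat) (zeta : L) :
  prime p -> prime s -> odd p -> odd s -> p != s ->
  (p.-1).-primitive_root (g%:R : 'F_p) ->
  (s \in [pchar L]) ->
  p.-primitive_root zeta ->
  (realizable_over_Fs s (ind_a p./2 g zeta) (ind_b L p./2)
   <-> legendre ((-1) ^+ p./2 * (p : int)) s = 1).
Proof.
move=> pp ps op os pns hG chs hz.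
have Np : p.-1 = (p./2).*2 by rewrite -{1}(odd_double_half p) op.
have n0 : (0 < p./2)%N.
  rewrite lt0n; apply/eqP => n0; move: Np; rewrite n0 /= => p1.
  by have := prime_gt1 pp; rewrite -(prednK (prime_gt0 pp)) p1.
have pL : (p%:R : L) != 0 by rewrite -(dvdn_pcharf chs) dvdn_prime2 // eq_sym.
have tau2 := tau_sq pp hG hz Np n0.
set n := p./2 in Np n0 tau2 *.
set t := tau p g zeta in tau2 *.
have t2nz : (-1) ^+ n * p%:R != 0 :> L by rewrite mulf_neq0 // signr_eq0.
have t0 : t != 0 by apply: contraNneq t2nz => t0; rewrite -tau2 t0 mul0r.
set a' : 'F_s := ((-1) ^+ n * (p : int))%:~R.
have Fa : Fs_to L a' = (-1) ^+ n * p%:R.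
  rewrite /a' intrM rmorphXn rmorphN1 /= Fs_toM // Fs_toX // Fs_toN // Fs_to1 //.
  by rewrite Fs_to_nat.
have leg : legendre ((-1) ^+ n * (p : int)) s = 1 <->
           (a' != 0 /\ exists x : 'F_s, x ^+ 2 = a').
  rewrite /legendre -/a'; split.
    case: eqP => // a0; case: existsP => [[x /eqP xe] _|_] //.
    by split; [apply/eqP|exists x].
  move=> [/negbTE -> [x xe]]; case: existsP => // [[]]; by exists x; rewrite xe.
have tfix0 : t ^+ s = t <-> (a' != 0 /\ exists x : 'F_s, x ^+ 2 = a').
  split.
    move=> ht; have [x ex] := frob_fixed chs ps ht; split.
      by apply: contraNneq t2nz => a0; rewrite -Fa a0.
    by exists x; apply: (Fs_to_inj chs ps); rewrite Fs_toX // ex Fa expr2.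
  move=> [_ [x xe]].
  have : (Fs_to L x - t) * (Fs_to L x + t) = 0.
    by rewrite -subr_sqr -Fs_toX // xe Fa -tau2 expr2 subrr.
  move/eqP; rewrite mulf_eq0 => /orP [/eqP e|/eqP e].
    by rewrite -(subr0_eq e) Fs_to_frob.
  have -> : t = - Fs_to L x by rewrite -[t](addKr (Fs_to L x)) e addr0.
  by rewrite exprNn -signr_odd os expr1 mulN1r Fs_to_frob.
have tfix : t ^+ s = t <-> legendre ((-1) ^+ n * (p : int)) s = 1.
  by split => [/tfix0/leg|/leg/tfix0].
apply: (iff_trans _ tfix); split.
  move=> [P [A' [B' [Pu [eA _]]]]].
  have htr : \tr (ind_a n g zeta) ^+ s = \tr (ind_a n g zeta).
    have : \tr (P *m ind_a n g zeta *m invmx P) = \tr (ind_a n g zeta).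
      by rewrite mxtrace_mulC mulmxA mulVmx // mul1mx.
    rewrite eA => <-; rewrite -pFrobenius_autE rmorph_sum.
    by apply: eq_bigr => i _; rewrite mxE; exact: Fs_to_frob.
  rewrite trace_ind_a in htr.
  have e2 := eta_tau pp hG hz Np.
  have : (t - 1) ^+ s = t - 1.
    have two : (2%:R : L) ^+ s = 2%:R by have := pFrobenius_aut_nat chs 2; rewrite pFrobenius_autE.
    by rewrite -e2 exprMn htr two.
  by rewrite -(pFrobenius_autE chs) rmorphB rmorph1 => /addIr h; exact: h.
move=> ht.
have ndv : ~~ (p %| s)%N by rewrite dvdn_prime2 //.
have [k sk] := exists_k pp hG ndv.
have := tau_frob pp hG hz chs os Np sk; rewrite ht -/t => /esym hk.
have ke : ~~ odd k.
  apply/negP => ko; move: hk; rewrite -signr_odd ko expr1 mulN1r => /eqP.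
  rewrite eq_sym -addr_eq0 -mulr2n -mulr_natl mulf_eq0 (negbTE t0) orbF.
  rewrite -(dvdn_pcharf chs) dvdn_prime2 // => /eqP s2.
  by move: os; rewrite s2.
have k2 : k = (k./2).*2 by rewrite -{1}(odd_double_half k) (negbTE ke).
set m := k./2 in k2.
rewrite -(prednK n0).
apply: (@realize s L chs ps n.-1 m (fun j => zeta ^+ (g ^ (2 * j)))).
- move=> j; apply: (zeta_Fp pp hz); rewrite !natrX (prednK n0) muln_modr [(2 * n)%N]mul2n.
  by rewrite -Np (prim_expr_mod hG).
- move=> j; rewrite -exprM; apply: (zeta_Fp pp hz).
  by rewrite natrM !natrX sk -exprD k2 -mul2n mulnDr.
- move=> i j /eqP; rewrite (eq_prim_root_expr hz) => /eqP hij.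
  have : ((g ^ (2 * i))%:R : 'F_p) = (g ^ (2 * j))%:R.
    by apply: val_inj; rewrite /= !val_Fp_nat // hij.
  rewrite !natrX => /eqP; rewrite (eq_prim_root_expr hG) Np -!mul2n.
  have lt : forall x : 'I_n.-1.+1, (2 * x < n.*2)%N.
    by move=> x; rewrite -mul2n ltn_pmul2l // -{2}(prednK n0) ltn_ord.
  rewrite [(2 * n)%N]mul2n !modn_small // eqn_pmul2l // => /eqP; exact: val_inj.
Qed.
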